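(* Let $\alpha_1,\alpha_2,\alpha_3\in\mathbb{C}$. For arrays $\mathbf{x}=(x_s)_{s\in\mathbb{Z}}$, $\mathbf{y}=(y_s)_{s\in\mathbb{Z}}$ and $v\in\mathbb{Z}$ write $z_i=x_{v+i}$, $w_i=y_{v+i}$, and $D=\alpha_3^2z_1^6+2\alpha_2\alpha_3z_0z_1^4z_2+(\alpha_2^2-4\alpha_1)z_0^2z_1^2z_2^2-4\alpha_3z_0^3z_2^3$. Consider the conditions (for all $v\in\mathbb{Z}$): (E) $z_0^2z_3^2+\alpha_1z_1^2z_2^2+\alpha_2z_0z_1z_2z_3+\alpha_3(z_0z_2^3+z_1^3z_3)=0$; (Coh) $z_0^2z_3=z_{-1}z_2^2$; (R1) $z_3=\dfrac{-\alpha_3z_1^3-\alpha_2z_0z_1z_2+w_1}{2z_0^2}$; (R2) $w_2=\dfrac{\alpha_3^2z_1^6+\alpha_2\alpha_3z_0z_1^4z_2+2\alpha_3z_0^3z_2^3+w_1^2+(-2\alpha_3z_1^3-\alpha_2z_0z_1z_2)w_1}{2z_0^3}$; (S) $w_1^2=D$. (a) For any $\mathbf{x}\in(\mathbb{C}^* )^{\mathbb{Z}}$ satisfying (E) and (Coh) there exists $\mathbf{y}\in\mathbb{C}^{\mathbb{Z}}$ such that $\mathbf{x},\mathbf{y}$ satisfy (R1), (R2), (S). (b) Conversely, if $\mathbf{x}\in(\mathbb{C}^* )^{\mathbb{Z}}$ and $\mathbf{y}\in\mathbb{C}^{\mathbb{Z}}$ satisfy (R1), (R2), (S), then $\mathbf{x}$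 satisfies (E) and (Coh). *)

(* Defs.v *)
From HB Require Import structures.
From mathcomp Require Import all_boot all_order all_algebra.
From mathcomp Require Import complex.
From mathcomp Require Import reals.
Set Implicit Arguments. Unset Strict Implicit. Unset Printing Implicit Defensive.
Import Order.TTheory GRing.Theory Num.Theory.
Local Open Scope ring_scope.
Local Open Scope complex_scope.

Section Defs.
Variable R : realType.
Notation C := (R[i]).
Variables (a1 a2 a3 : C).

Definition zv (x : int -> C) (v : int) (i : int) : C := x (v + i).

Definition Dv (x : int -> C) (v : int) : C :=
  let z0 := zv x v 0 in let z1 := zv x v 1 in let z2 := zv x v 2 in
  a3 ^+ 2 * z1 ^+ 6 + 2 * a2 * a3 * z0 * z1 ^+ 4 * z2
  + (a2 ^+ 2 - 4 * a1) * z0 ^+ 2 * z1 ^+ 2 * z2 ^+ 2 - 4 * a3 * z0 ^+ 3 * z2 ^+ 3.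

Definition condE (x : int -> C) : Prop := forall v : int,
  let z0 := zv x v 0 in let z1 := zv x v 1 in let z2 := zv x v 2 in
  let z3 := zv x v 3 in
  z0 ^+ 2 * z3 ^+ 2 + a1 * z1 ^+ 2 * z2 ^+ 2 + a2 * z0 * z1 * z2 * z3
  + a3 * (z0 * z2 ^+ 3 + z1 ^+ 3 * z3) = 0.

Definition condCoh (x : int -> C) : Prop := forall v : int,
  zv x v 0 ^+ 2 * zv x v 3 = zv x v (-1) * zv x v 2 ^+ 2.

Definition condR1 (x y : int -> C) : Prop := forall v : int,
  let z0 := zv x v 0 in let z1 := zv x v 1 in let z2 := zv x v 2 in
  let z3 := zv x v 3 in let w1 := zv y v 1 in
  z3 = (- a3 * z1 ^+ 3 - a2 * z0 * z1 * z2 + w1) / (2 * z0 ^+ 2).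

Definition condR2 (x y : int -> C) : Prop := forall v : int,
  let z0 := zv x v 0 in let z1 := zv x v 1 in let z2 := zv x v 2 in
  let w1 := zv y v 1 in let w2 := zv y v 2 in
  w2 = (a3 ^+ 2 * z1 ^+ 6 + a2 * a3 * z0 * z1 ^+ 4 * z2
        + 2 * a3 * z0 ^+ 3 * z2 ^+ 3 + w1 ^+ 2
        + (- 2 * a3 * z1 ^+ 3 - a2 * z0 * z1 * z2) * w1) / (2 * z0 ^+ 3).

Definition condS (x y : int -> C) : Prop := forall v : int,
  zv y v 1 ^+ 2 = Dv x v.

End Defs.

(* Main.v *)
Require Import Defs.
From HB Require Import structures.
From mathcomp Require Import all_boot all_order all_algebra.
From mathcomp Require Import complex.
From mathcomp Require Import reals.
From mathcomp Require Import ring.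
Import Order.TTheory GRing.Theory Num.Theory.
Local Open Scope ring_scope.
Local Open Scope complex_scope.

Section Alg.
Variable F : fieldType.
Hypothesis two : (2 : F) != 0.
Variables (a1 a2 a3 : F).

Lemma alg_E (z0 z1 z2 z3 w1 : F) : z0 != 0 ->
  z3 = (- a3 * z1 ^+ 3 - a2 * z0 * z1 * z2 + w1) / (2 * z0 ^+ 2) ->
  w1 ^+ 2 = a3 ^+ 2 * z1 ^+ 6 + 2 * a2 * a3 * z0 * z1 ^+ 4 * z2
  + (a2 ^+ 2 - 4 * a1) * z0 ^+ 2 * z1 ^+ 2 * z2 ^+ 2 - 4 * a3 * z0 ^+ 3 * z2 ^+ 3 ->
  z0 ^+ 2 * z3 ^+ 2 + a1 * z1 ^+ 2 * z2 ^+ 2 + a2 * z0 * z1 * z2 * z3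
  + a3 * (z0 * z2 ^+ 3 + z1 ^+ 3 * z3) = 0.
Proof.
move=> nz h1 hS.
have hw : w1 = 2 * z0 ^+ 2 * z3 + a3 * z1 ^+ 3 + a2 * z0 * z1 * z2.
  by rewrite h1; field; rewrite ?two ?nz.
set E := (X in X = 0).
have : (2 * z0) ^+ 2 * E = 0.
  have -> : (2 * z0) ^+ 2 * E = w1 ^+ 2 - (a3 ^+ 2 * z1 ^+ 6 + 2 * a2 * a3 * z0 * z1 ^+ 4 * z2
  + (a2 ^+ 2 - 4 * a1) * z0 ^+ 2 * z1 ^+ 2 * z2 ^+ 2 - 4 * a3 * z0 ^+ 3 * z2 ^+ 3).
    by rewrite hw /E; ring.
  by rewrite hS subrr.
by move/eqP; rewrite mulf_eq0 expf_eq0 /= mulf_eq0 (negbTE two) (negbTE nz) /= => /eqP.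
Qed.

Lemma alg_S (z0 z1 z2 z3 : F) :
  z0 ^+ 2 * z3 ^+ 2 + a1 * z1 ^+ 2 * z2 ^+ 2 + a2 * z0 * z1 * z2 * z3
  + a3 * (z0 * z2 ^+ 3 + z1 ^+ 3 * z3) = 0 ->
  (2 * z0 ^+ 2 * z3 + a3 * z1 ^+ 3 + a2 * z0 * z1 * z2) ^+ 2 =
  a3 ^+ 2 * z1 ^+ 6 + 2 * a2 * a3 * z0 * z1 ^+ 4 * z2
  + (a2 ^+ 2 - 4 * a1) * z0 ^+ 2 * z1 ^+ 2 * z2 ^+ 2 - 4 * a3 * z0 ^+ 3 * z2 ^+ 3.
Proof.
move=> hE; apply/eqP; rewrite -subr_eq0; apply/eqP.
set E := (X in X = 0) in hE.
by rewrite -[RHS](mulr0 (4 * z0 ^+ 2)) -hE /E; ring.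
Qed.

(* u = x(v-1), p = x v, q = x(v+1), r = x(v+2) *)
Lemma alg_R2 (u p q r : F) : u != 0 ->
  (a3 ^+ 2 * p ^+ 6 + a2 * a3 * u * p ^+ 4 * q
        + 2 * a3 * u ^+ 3 * q ^+ 3 + (2 * u ^+ 2 * r + a3 * p ^+ 3 + a2 * u * p * q) ^+ 2
        + (- 2 * a3 * p ^+ 3 - a2 * u * p * q) * (2 * u ^+ 2 * r + a3 * p ^+ 3 + a2 * u * p * q))
   / (2 * u ^+ 3) = 2 * u * r ^+ 2 + a3 * q ^+ 3 + a2 * p * q * r.
Proof. by move=> nz; field; rewrite ?two ?nz. Qed.

End Alg.

Lemma two_neq0 (R : realType) : (2 : R[i]) != 0.
Proof. by rewrite pnatr_eq0. Qed.

Theorem theorem6p4 (R : realType) (a1 a2 a3 : R[i]) :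
  (forall x : int -> R[i], (forall s, x s != 0) ->
     condE a1 a2 a3 x -> condCoh x ->
     exists y : int -> R[i],
       [/\ condR1 a2 a3 x y, condR2 a2 a3 x y & condS a1 a2 a3 x y]) /\
  (forall (x y : int -> R[i]), (forall s, x s != 0) ->
     condR1 a2 a3 x y -> condR2 a2 a3 x y -> condS a1 a2 a3 x y ->
     condE a1 a2 a3 x /\ condCoh x).
Proof.
have two := two_neq0 R.
split.
- move=> x nz hE hC.
  exists (fun s => 2 * x (s - 1) ^+ 2 * x (s + 2) + a3 * x s ^+ 3
                   + a2 * x (s - 1) * x s * x (s + 1)).
  split.
  + move=> v; rewrite /zv /=.
    have -> : v + 1 - 1 = v + 0 by ring.
    have -> : v + 1 + 2 = v + 3 by ring.
    have -> : v + 1 + 1 = v + 2 by ring.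
    by field; rewrite ?two ?nz.
  + move=> v; rewrite /zv /=.
    have -> : v + 1 - 1 = v + 0 by ring.
    have -> : v + 1 + 2 = v + 3 by ring.
    have -> : v + 1 + 1 = v + 2 by ring.
    have -> : v + 2 - 1 = v + 1 by ring.
    have -> : v + 2 + 2 = v + 4 by ring.
    have -> : v + 2 + 1 = v + 3 by ring.
    rewrite alg_R2 //.
    have := hC (v + 1); rewrite /zv.
    have -> : v + 1 + 0 = v + 1 by ring.
    have -> : v + 1 + 3 = v + 4 by ring.
    have -> : v + 1 + -1 = v + 0 by ring.
    have -> : v + 1 + 2 = v + 3 by ring.
    by move=> hc; rewrite -mulrA hc; ring.
  + move=> v; rewrite /zv /Dv /=.
    have -> : v + 1 - 1 = v + 0 by ring.
    have -> : v + 1 + 2 = v + 3 by ring.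
    have -> : v + 1 + 1 = v + 2 by ring.
    exact: alg_S (hE v).
- move=> x y nz h1 h2 hS; split.
  + move=> v; have Hr := h1 v; have Hs := hS v; rewrite /Dv /= in Hr Hs; exact: (@alg_E _ two a1 a2 a3 _ _ _ _ _ (nz _) Hr Hs).
  + move=> v; rewrite /zv.
    have H1 := h1 v; have H1' := h1 (v - 1); have H2 := h2 (v - 1).
    rewrite /zv /= in H1 H1' H2.
    have e1 : v - 1 + 0 = v + -1 by ring.
    have e2 : v - 1 + 1 = v + 0 by ring.
    have e3 : v - 1 + 2 = v + 1 by ring.
    have e4 : v - 1 + 3 = v + 2 by ring.
    rewrite e1 e2 e3 e4 in H1' H2.
    have nu := nz (v + -1).
    have hs : y (v + 0) = 2 * x (v + -1) ^+ 2 * x (v + 2) + a3 * x (v + 0) ^+ 3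
                + a2 * x (v + -1) * x (v + 0) * x (v + 1).
      by rewrite H1'; field; rewrite ?two ?nz.
    rewrite hs alg_R2 // in H2.
    by rewrite H1 H2; field; rewrite ?two ?nz ?nu.
Qed.
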